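(* Under Assumptions 1 and 2, $(\mathcal C,\rho)$ is a complete metric space.
   Context: Fix $\beta>0$ and $R>0$. Assumption 1: $u:[0,\infty)\to\{-\infty\}\cup\mathbb R$ is twice continuously differentiable on $(0,\infty)$ with $u'>0$, $u''<0$, $\lim_{x\downarrow 0}u'(x)=\infty$, $\lim_{x\to\infty}u'(x)=0$. Assumption 2: $\{z_t\}_{t\ge0}$ is a Markov process on a set $Z$, $y:Z\to[0,\infty)$, income is $y_t=y(z_t)$, and $\sup_{z\in Z}E[y(z_{t+1})\mid z_t=z]<\infty$. $\mathcal C$ is the set of functions $c:(0,\infty)\times Z\to\mathbb R$ that are increasing in $a$, satisfy $0<c(a,z)\le a$, and satisfy $\sup_{(a,z)}|u'(c(a,z))-u'(a)|<\infty$. On $\mathcal C$ define $\rho(c,d)=\sup_{(a,z)}|u'(c(a,z))-u'(d(a,z))|$. *)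

(* Defs.v *)
From Stdlib Require Import Reals Lra Classical ClassicalEpsilon.
Open Scope R_scope.

(** The half-line (0,oo) as a subtype, so that policy functions are
    functions on (0,oo) x Z exactly (no junk values outside the domain). *)
Definition posR : Type := {a : R | 0 < a}.
Definition pval (a : posR) : R := proj1_sig a.

Definition Assumption1 (u u' u'' : R -> R) : Prop :=
  (forall x, 0 < x -> derivable_pt_lim u x (u' x)) /\
  (forall x, 0 < x -> derivable_pt_lim u' x (u'' x)) /\
  (forall x, 0 < x -> continuity_pt u'' x) /\
  (forall x, 0 < x -> 0 < u' x) /\
  (forall x, 0 < x -> u'' x < 0) /\
  (forall M, exists delta, 0 < delta /\ forall x, 0 < x < delta -> M < u' x) /\
  (forall eps, 0 < eps -> exists K, forall x, K < x -> Rabs (u' x) < eps).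

Definition in_C {Z : Type} (u' : R -> R) (c : posR -> Z -> R) : Prop :=
  (forall a1 a2 z, pval a1 <= pval a2 -> c a1 z <= c a2 z) /\
  (forall a z, 0 < c a z <= pval a) /\
  (exists M, forall a z, Rabs (u' (c a z) - u' (pval a)) <= M).

Definition rho_set {Z : Type} (u' : R -> R) (c d : posR -> Z -> R) : R -> Prop :=
  fun r => exists a z, r = Rabs (u' (c a z) - u' (d a z)).

(** rho(c,d) = sup of rho_set (the least upper bound when it exists;
    0 by convention otherwise, which never happens for c, d in C with Z
    nonempty, and gives sup of the empty set = 0 when Z is empty). *)
Definition rho {Z : Type} (u' : R -> R) (c d : posR -> Z -> R) : R :=
  match excluded_middle_informative
          (bound (rho_set u' c d) /\ exists r, rho_set u' c d r) with
  | left H => proj1_sig (completeness (rho_set u' c d) (proj1 H) (proj2 H))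
  | right _ => 0
  end.

Definition is_metric_space {X : Type} (S : X -> Prop) (dist : X -> X -> R) : Prop :=
  (forall x y, S x -> S y -> 0 <= dist x y) /\
  (forall x y, S x -> S y -> (dist x y = 0 <-> x = y)) /\
  (forall x y, S x -> S y -> dist x y = dist y x) /\
  (forall x y w, S x -> S y -> S w -> dist x w <= dist x y + dist y w).

Definition is_complete {X : Type} (S : X -> Prop) (dist : X -> X -> R) : Prop :=
  forall f : nat -> X,
    (forall n, S (f n)) ->
    (forall eps, 0 < eps -> exists N, forall m n, (N <= m)%nat -> (N <= n)%nat ->
        dist (f m) (f n) < eps) ->
    exists l, S l /\
      (forall eps, 0 < eps -> exists N, forall n, (N <= n)%nat -> dist (f n) l < eps).

Definition complete_metric_space {X : Type} (S : X -> Prop) (dist : X -> X -> R) : Prop :=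
  is_metric_space S dist /\ is_complete S dist.

(* Main.v *)
Require Import Defs.
From Stdlib Require Import Reals Lra Lia Ranalysis5 ClassicalEpsilon FunctionalExtensionality.
Open Scope R_scope.

Section Aux.
Variables u u' u'' : R -> R.
Hypothesis hu : Assumption1 u u' u''.

Lemma dec_strict : forall x y, 0 < x -> x < y -> u' y < u' x.
Proof.
  destruct hu as [_ [H2 [_ [_ [H5 _]]]]].
  intros x y hx hxy.
  destruct (MVT_cor2 u' u'' x y hxy) as [c [Hc Hc2]].
  { intros c Hc; apply H2; lra. }
  assert (u'' c < 0) by (apply H5; lra).
  assert (u'' c * (y - x) < 0).
  { assert (0 < y - x) by lra. nra. }
  lra.
Qed.

Lemma dec_le : forall x y, 0 < x -> x <= y -> u' y <= u' x.
Proof.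
  intros x y hx hxy. destruct (Req_dec x y) as [->|hne]; [lra|].
  left; apply dec_strict; lra.
Qed.

Lemma inj_u' : forall x y, 0 < x -> 0 < y -> u' x = u' y -> x = y.
Proof.
  intros x y hx hy e.
  destruct (Rtotal_order x y) as [h|[h|h]]; auto.
  - pose proof (dec_strict x y hx h); lra.
  - pose proof (dec_strict y x hy h); lra.
Qed.

Lemma le_back : forall x y, 0 < x -> 0 < y -> u' y <= u' x -> x <= y.
Proof.
  intros x y hx hy h. destruct (Rle_dec x y) as [|n]; auto.
  pose proof (dec_strict y x hy ltac:(lra)); lra.
Qed.

Lemma ivt_u' : forall a L, 0 < a -> u' a <= L -> exists x, 0 < x <= a /\ u' x = L.
Proof.
  intros a L ha hL.
  destruct hu as [_ [H2 [_ [_ [_ [H6 _]]]]]].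
  destruct (Req_dec (u' a) L) as [e|ne].
  { exists a; split; [lra|auto]. }
  destruct (H6 L) as [d [hd Hd]].
  set (x0 := Rmin (d/2) (a/2)).
  assert (hx0 : 0 < x0 /\ x0 < d /\ x0 < a).
  { unfold x0; pose proof (Rmin_l (d/2) (a/2)); pose proof (Rmin_r (d/2) (a/2)).
    split; [apply Rmin_glb_lt; lra| lra]. }
  assert (hL0 : L < u' x0) by (apply Hd; lra).
  destruct (IVT_interv (fun x => L - u' x) x0 a) as [z [Hz Hz2]].
  - intros b Hb. apply continuity_pt_minus; [apply continuity_pt_const; intros ? ?; auto|].
    apply derivable_continuous_pt. exists (u'' b). apply H2; lra.
  - lra.
  - simpl; lra.
  - simpl; lra.
  - exists z; split; [lra|]. simpl in Hz2; lra.
Qed.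

Lemma lim_close : forall (s : nat -> R) l c e N,
  Un_cv s l -> (forall m, (N <= m)%nat -> Rabs (c - s m) <= e) -> Rabs (c - l) <= e.
Proof.
  intros s l c e N hs hb.
  destruct (Rle_dec (Rabs (c - l)) e) as [|n]; auto.
  destruct (hs (Rabs (c - l) - e)) as [N1 HN1]; [lra|].
  specialize (HN1 (max N N1) ltac:(lia)). unfold Rdist in HN1.
  specialize (hb (max N N1) ltac:(lia)).
  pose proof (Rabs_triang (c - s (max N N1)) (s (max N N1) - l)).
  replace (c - s (max N N1) + (s (max N N1) - l)) with (c - l) in H by ring.
  lra.
Qed.
End Aux.

Section Rho.
Variable Z : Type.
Variable u' : R -> R.

Lemma rho_le : forall (c d : posR -> Z -> R) M, 0 <= M ->
  (forall a z, Rabs (u' (c a z) - u' (d a z)) <= M) -> rho u' c d <= M.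
Proof.
  intros c d M hM hb. unfold rho.
  destruct ClassicalEpsilon.excluded_middle_informative as [h|h]; auto.
  destruct completeness as [m [Hm1 Hm2]]; simpl.
  apply Hm2. intros r [a [z ->]]. apply hb.
Qed.

Lemma rho_ge : forall (c d : posR -> Z -> R) M,
  (forall a z, Rabs (u' (c a z) - u' (d a z)) <= M) ->
  forall a z, Rabs (u' (c a z) - u' (d a z)) <= rho u' c d.
Proof.
  intros c d M hb a z. unfold rho.
  destruct ClassicalEpsilon.excluded_middle_informative as [h|h].
  - destruct completeness as [m [Hm1 Hm2]]; simpl.
    apply Hm1. exists a, z; auto.
  - exfalso; apply h; split.
    + exists M. intros r [a' [z' ->]]. apply hb.
    + exists (Rabs (u' (c a z) - u' (d a z))); exists a, z; auto.
Qed.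

Lemma rho_nonneg : forall (c d : posR -> Z -> R), 0 <= rho u' c d.
Proof.
  intros c d. unfold rho.
  destruct ClassicalEpsilon.excluded_middle_informative as [h|h]; [|lra].
  destruct completeness as [m [Hm1 Hm2]]; simpl.
  destruct h as [_ [r [a [z ->]]]].
  apply Rle_trans with (Rabs (u' (c a z) - u' (d a z))); [apply Rabs_pos|].
  apply Hm1; exists a, z; auto.
Qed.

Lemma inC_bound : forall c d : posR -> Z -> R, in_C u' c -> in_C u' d ->
  exists M, forall a z, Rabs (u' (c a z) - u' (d a z)) <= M.
Proof.
  intros c d [_ [_ [M1 H1]]] [_ [_ [M2 H2]]].
  exists (M1 + M2); intros a z.
  specialize (H1 a z); specialize (H2 a z).
  rewrite Rabs_minus_sym in H2.
  pose proof (Rabs_triang (u' (c a z) - u' (pval a)) (u' (pval a) - u' (d a z))).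
  replace (u' (c a z) - u' (pval a) + (u' (pval a) - u' (d a z)))
    with (u' (c a z) - u' (d a z)) in H by ring.
  lra.
Qed.
End Rho.

Theorem lemma4
  (beta Rr : R) (hbeta : 0 < beta) (hR : 0 < Rr)
  (u u' u'' : R -> R) (hu : Assumption1 u u' u'')
  (Z : Type) (y : Z -> R) (hy : forall z, 0 <= y z)
  (Ey : Z -> R) (* Ey z = E[y(z_{t+1}) | z_t = z] for the Markov process *)
  (hEy : exists B, forall z, Ey z <= B) :
  complete_metric_space (@in_C Z u') (@rho Z u').
Proof.
  split.
  - split; [|split; [|split]].
    + intros; apply rho_nonneg.
    + intros c d hc hd; split.
      * intro h0.
        destruct (inC_bound Z u' c d hc hd) as [M HM].
        apply functional_extensionality; intro a.
        apply functional_extensionality; intro z.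
        pose proof (rho_ge Z u' c d M HM a z). rewrite h0 in H.
        pose proof (Rabs_pos (u' (c a z) - u' (d a z))).
        assert (Rabs (u' (c a z) - u' (d a z)) = 0) by lra.
        assert (H2 : u' (c a z) - u' (d a z) = 0).
        { destruct (Req_dec (u' (c a z) - u' (d a z)) 0) as [e|e]; auto.
          pose proof (Rabs_pos_lt _ e); lra. }
        destruct hc as [_ [hc _]]; destruct hd as [_ [hd _]].
        apply (inj_u' u u' u'' hu); [apply (hc a z)|apply (hd a z)|lra].
      * intros ->. apply Rle_antisym; [|apply rho_nonneg].
        apply rho_le; [lra|]. intros; rewrite Rminus_diag, Rabs_R0; lra.
    + intros c d hc hd.
      destruct (inC_bound Z u' c d hc hd) as [M HM].
      destruct (inC_bound Z u' d c hd hc) as [M' HM'].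
      apply Rle_antisym; apply rho_le; try apply rho_nonneg; intros a z.
      * rewrite Rabs_minus_sym; apply (rho_ge Z u' d c M' HM').
      * rewrite Rabs_minus_sym; apply (rho_ge Z u' c d M HM).
    + intros c d w hc hd hw.
      destruct (inC_bound Z u' c d hc hd) as [M HM].
      destruct (inC_bound Z u' d w hd hw) as [M' HM'].
      apply rho_le.
      { pose proof (rho_nonneg Z u' c d); pose proof (rho_nonneg Z u' d w); lra. }
      intros a z.
      pose proof (rho_ge Z u' c d M HM a z).
      pose proof (rho_ge Z u' d w M' HM' a z).
      pose proof (Rabs_triang (u' (c a z) - u' (d a z)) (u' (d a z) - u' (w a z))).
      replace (u' (c a z) - u' (d a z) + (u' (d a z) - u' (w a z)))
        with (u' (c a z) - u' (w a z)) in H1 by ring.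
      lra.
  - intros f hf hcau.
    assert (hpt : forall m n a z, Rabs (u' (f m a z) - u' (f n a z)) <= rho u' (f m) (f n)).
    { intros m n a z. destruct (inC_bound Z u' (f m) (f n) (hf m) (hf n)) as [M HM].
      apply (rho_ge Z u' _ _ M HM). }
    assert (hlim : forall a z, exists x, 0 < x <= pval a /\
               Un_cv (fun n => u' (f n a z)) (u' x)).
    { intros a z.
      assert (hC : Cauchy_crit (fun n => u' (f n a z))).
      { intros eps heps. destruct (hcau eps heps) as [N HN].
        exists N; intros n m hn hm. unfold Rdist.
        eapply Rle_lt_trans; [apply hpt|apply HN; lia]. }
      destruct (R_complete _ hC) as [l hl].
      assert (ha : 0 < pval a) by (destruct a; simpl; auto).
      assert (hge : u' (pval a) <= l).
      { apply (Rle_cv_lim (Un:=fun _ => u' (pval a)) (Vn:=fun n => u' (f n a z))); auto.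
        - intro n. destruct (hf n) as [_ [h2 _]]. specialize (h2 a z).
          apply (dec_le u u' u'' hu); lra.
        - intros e he; exists 0%nat; intros; unfold Rdist; rewrite Rminus_diag, Rabs_R0; lra. }
      destruct (ivt_u' u u' u'' hu (pval a) l ha hge) as [x [hx1 hx2]].
      exists x; split; auto. rewrite hx2; auto. }
    set (cl := fun a z => proj1_sig (constructive_indefinite_description _ (hlim a z))).
    assert (hcl : forall a z, 0 < cl a z <= pval a /\
               Un_cv (fun n => u' (f n a z)) (u' (cl a z))).
    { intros a z. unfold cl. destruct constructive_indefinite_description; simpl; auto. }
    assert (hunif : forall eps, 0 < eps -> exists N, forall n, (N <= n)%nat ->
               forall a z, Rabs (u' (f n a z) - u' (cl a z)) <= eps).
    { intros eps heps. destruct (hcau eps heps) as [N HN].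
      exists N; intros n hn a z.
      apply (lim_close (fun m => u' (f m a z)) _ _ _ N); [apply hcl|].
      intros m hm. left. eapply Rle_lt_trans; [apply hpt|apply HN; lia]. }
    assert (hin : in_C u' cl).
    { split; [|split].
      - intros a1 a2 z h12.
        destruct (hcl a1 z) as [[p1 _] l1]; destruct (hcl a2 z) as [[p2 _] l2].
        apply (le_back u u' u'' hu); auto.
        refine (Rle_cv_lim _ l2 l1).
        intro n. destruct (hf n) as [hm [hp _]].
        apply (dec_le u u' u'' hu); [apply (hp a1 z)|apply hm; auto].
      - intros a z; apply hcl.
      - destruct (hunif 1 ltac:(lra)) as [N HN].
        destruct (hf N) as [_ [_ [M HM]]].
        exists (1 + M); intros a z.
        specialize (HN N (le_n _) a z). specialize (HM a z).
        pose proof (Rabs_triang (u' (cl a z) - u' (f N a z)) (u' (f N a z) - u' (pval a))).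
        replace (u' (cl a z) - u' (f N a z) + (u' (f N a z) - u' (pval a)))
          with (u' (cl a z) - u' (pval a)) in H by ring.
        rewrite Rabs_minus_sym in HN. lra. }
    exists cl; split; auto.
    intros eps heps. destruct (hunif (eps/2) ltac:(lra)) as [N HN].
    exists N; intros n hn.
    apply Rle_lt_trans with (eps/2); [|lra].
    apply rho_le; [lra|]. apply HN; auto.
Qed.
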